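(* Let $B$ be an nbc basis of $M$ with $|\mathrm{IA}(B)|=k+1$. Write $B-\mathrm{IA}(B)=\{e_1>\cdots>e_{r-k}\}$ and $(E-B)-\min(E-B)=\{e_{r-k+1}<\cdots<e_{n-k-1}\}$, and let $\mathcal F(B)|\mathcal G(B)$ be the nbc biflag of $B$. Then $(\mathcal F(B)|\mathcal G(B),(e_1,\dots,e_{n-k-1}))\in\mathcal T^{n-k-1}$; equivalently, for every $e\in (B-\mathrm{IA}(B))\cup((E-B)-\min(E-B))$, \[ e=\max\Big(E-\mathrm{cl}\big((B-\mathrm{IA}(B))_{>e}\big)-\mathrm{cl}^\perp\big((E-B)_{>e}\big)\Big), \] where $X_{>e}=\{x\in X:x>e\}$.
   Context: Let $M$ be a matroid with no loops and no coloops on the ground set $E=\{0,1,\dots,n\}$, totally ordered by the usual order of integers, of rank $r+1$; its dual $M^\perp$ has rank $n-r$. Write $\mathrm{cl}$, $\mathrm{cl}^\perp$ for the closure operators of $M$, $M^\perp$. A biflat of $M$ is a pair $F|G$ where $F$ is a flat of $M$, $G$ is a flat of $M^\perp$, both are nonempty, they are not both equal to $E$, and $F\cup G=E$. Two biflats $F|G$, $F'|G'$ are compatible if ($F\subseteq F'$ and $G\supseteq G'$) or ($F\supseteq F'$ and $G\subseteq G'$). A biflag is a set of pairwise compatible biflats with $\bigcup_{F|G}(F\cap G)\neq E$; its length is its number of biflats. For a basis $B$ and $i\in B$, $C^\perp(B,i)$ is the unique cocircuit of $M$ contained in $(E-B)\cup i$ and containing $i$; for $i\notin B$, $C(B,i)$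 is the unique circuit contained in $B\cup i$ and containing $i$. $\mathrm{IA}(B)=\{i\in B: i=\min C^\perp(B,i)\}$, $\mathrm{EA}(B)=\{i\notin B: i=\min C(B,i)\}$. $B$ is an nbc basis if $\mathrm{EA}(B)=\emptyset$. nbc biflag: with $e_1,\dots,e_{n-k-1}$ as in the claim, $\mathcal F(B)|\mathcal G(B)$ is the biflag with biflats $F_j|G_j=\mathrm{cl}\{e_1,\dots,e_j\}|E$ for $1\le j\le r-k$ and $F_j|G_j=E|\mathrm{cl}^\perp\{e_j,\dots,e_{n-k-1}\}$ for $r-k+1\le j\le n-k-1$. $\mathcal T^m$: the set of pairs $(\mathcal F|\mathcal G,\mathbf e)$ with $\mathcal F|\mathcal G$ a biflag of length $m$ with biflats indexed $F_1|G_1,\dots,F_m|G_m$, $F_1\subseteq\cdots\subseteq F_m$, $G_1\supseteq\cdots\supseteq G_m$, and $\mathbf e=(e_1,\dots,e_m)$ distinct elements of $E$ with $e_i\in F_i\cap G_i$ and $e_i=\max\big(E-\bigcup_{j:\,e_j>e_i}(F_j\cap G_j)\big)$ for all $i$. *)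

(* Defs.v *)
From mathcomp Require Import all_boot.
Set Implicit Arguments. Unset Strict Implicit. Unset Printing Implicit Defensive.

Section Matroid.
Variable T : finType.
Implicit Types (bases : {set {set T}}) (X Y C F G : {set T}).

Definition is_matroid bases :=
  bases != set0 /\
  forall B1 B2, B1 \in bases -> B2 \in bases ->
    forall x, x \in B1 :\: B2 ->
      exists2 y, y \in B2 :\: B1 & (y |: (B1 :\ x)) \in bases.

Definition indep bases X := [exists B in bases, X \subset B].
Definition rank bases X := \max_(B in bases) #|X :&: B|.
Definition cl bases X := [set x | rank bases (x |: X) == rank bases X].
Definition flat bases X := cl bases X == X.

Definition dual bases : {set {set T}} := [set ~: B | B in bases].
Definition clp bases X := cl (dual bases) X.

Definition circuit bases C :=
  ~~ indep bases C && [forall D : {set T}, (D \proper C) ==> indep bases D].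
Definition cocircuit bases C := circuit (dual bases) C.

Definition loopless bases := forall x : T, exists2 B, B \in bases & x \in B.
Definition coloopless bases := forall x : T, exists2 B, B \in bases & x \notin B.

Definition biflat bases F G :=
  [/\ flat bases F, flat (dual bases) G, (F != set0) && (G != set0),
      ~~ ((F == setT) && (G == setT)) & F :|: G = setT].

Definition compatible F G F' G' :=
  (F \subset F') && (G' \subset G) || (F' \subset F) && (G \subset G').

End Matroid.

Section Ordered.
Variable n : nat.
Local Notation E := 'I_n.+1.
Implicit Types (bases : {set {set E}}) (B X S : {set E}).

Definition is_max S (x : E) := x \in S /\ forall y, y \in S -> y <= x.
Definition is_min S (x : E) := x \in S /\ forall y, y \in S -> x <= y.

(* IA(B): i in B with i = min C^perp(B,i), C^perp(B,i) the (unique) cocircuit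
   contained in (E - B) u {i} and containing i *)
Definition IA bases B := [set i in B |
  [forall C : {set E}, (cocircuit bases C && (C \subset ~: B :|: [set i])
                        && (i \in C)) ==> [forall x in C, i <= x]]].
(* EA(B): i notin B with i = min C(B,i) *)
Definition EA bases B := [set i in ~: B |
  [forall C : {set E}, (circuit bases C && (C \subset B :|: [set i])
                        && (i \in C)) ==> [forall x in C, i <= x]]].
Definition nbc bases B := (B \in bases) && (EA bases B == set0).

Definition gt_part X (e : E) := [set x in X | e < x].

(* biflag of length m, indexed 0..m-1 (paper's F_1..F_m) *)
Definition biflag bases m (F G : nat -> {set E}) :=
  [/\ forall j, j < m -> biflat bases (F j) (G j),
      forall i j, i < m -> j < m -> compatible (F i) (G i) (F j) (G j),
      (* the m biflats are distinct, so the biflag has length m *)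
      forall i j, i < m -> j < m -> (F i, G i) = (F j, G j) -> i = j &
      \bigcup_(j < m) (F j :&: G j) != setT].

Definition in_T bases m (F G : nat -> {set E}) (e : nat -> E) :=
  [/\ biflag bases m F G,
      forall i j, i <= j < m -> F i \subset F j /\ G j \subset G i,
      forall i j, i < m -> j < m -> e i = e j -> i = j,
      forall i, i < m -> e i \in F i :&: G i &
      forall i, i < m ->
        is_max (~: \bigcup_(j < m | e i < e j) (F j :&: G j)) (e i)].

Definition coB_nomin B := [set x in ~: B | [exists y in ~: B, y < x]].

(* e_1 > ... > e_{r-k} (elements of B - IA(B)) followed by
   e_{r-k+1} < ... < e_{n-k-1} (elements of (E-B) - min(E-B)) *)
Definition nbc_seq bases B : seq E :=
  sort (fun x y : E => y < x) (enum (B :\: IA bases B)) ++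
  sort (fun x y : E => x < y) (enum (coB_nomin B)).

Definition nbc_e bases B (j : nat) : E := nth ord0 (nbc_seq bases B) j.

(* nbc biflag: for 0-based j (paper index j+1), with r-k = #|B - IA(B)| *)
Definition nbc_F bases B (j : nat) : {set E} :=
  if j < #|B :\: IA bases B|
  then cl bases [set x in take j.+1 (nbc_seq bases B)] else setT.
Definition nbc_G bases B (j : nat) : {set E} :=
  if j < #|B :\: IA bases B| then setT
  else clp bases [set x in drop j (nbc_seq bases B)].

End Ordered.

(* Main.v *)
Require Import Defs.
From mathcomp Require Import all_boot zify.
Set Implicit Arguments. Unset Strict Implicit. Unset Printing Implicit Defensive.

Lemma setU1_id (T : finType) (x : T) (A : {set T}) : x \in A -> x |: A = A.
Proof. by move=> xA; apply/setUidPr; rewrite sub1set. Qed.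

Lemma clE (T : finType) (bs : {set {set T}}) X x :
  (x \in cl bs X) = (rank bs (x |: X) == rank bs X).
Proof. by rewrite /cl inE. Qed.

Lemma cl_setT (T : finType) (bs : {set {set T}}) : cl bs setT = setT.
Proof. by apply/setP => x; rewrite clE setUT eqxx inE. Qed.

Section Gen.
Variables (T : finType) (bs : {set {set T}}) (s : nat).
Hypothesis HM : is_matroid bs.
Hypothesis Hsz : forall B, B \in bs -> #|B| = s.
Implicit Types (X Y I J C D B P Q : {set T}).

Lemma indepP X : reflect (exists2 B, B \in bs & X \subset B) (indep bs X).
Proof.
apply: (iffP existsP) => [[B /andP[]]|[B]]; first by eauto.
by move=> ? ?; exists B; apply/andP.
Qed.

Lemma indep_sub X Y : X \subset Y -> indep bs Y -> indep bs X.
Proof.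
move=> sXY /indepP[B HB sYB]; apply/indepP; exists B => //.
exact: subset_trans sXY sYB.
Qed.

Lemma basis_indep B : B \in bs -> indep bs B.
Proof. by move=> HB; apply/indepP; exists B. Qed.

Lemma indep_card X : indep bs X -> #|X| <= s.
Proof. by case/indepP=> B HB sXB; rewrite -(Hsz HB); exact: subset_leq_card. Qed.

Lemma rank_ge X I : I \subset X -> indep bs I -> #|I| <= rank bs X.
Proof.
move=> sIX /indepP[B HB sIB]; rewrite /rank.
have H := @leq_bigmax_cond _ (fun B => B \in bs) (fun B => #|X :&: B|) B HB.
apply: leq_trans H.
by apply: subset_leq_card; rewrite subsetI sIX.
Qed.

Lemma rank_le X m : (forall B, B \in bs -> #|X :&: B| <= m) -> rank bs X <= m.
Proof. by move=> H; apply/bigmax_leqP. Qed.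

Lemma rank_indep I : indep bs I -> rank bs I = #|I|.
Proof.
move=> HI; apply/eqP; rewrite eqn_leq rank_ge // andbT.
by apply: rank_le => B _; apply: subset_leq_card; apply: subsetIl.
Qed.

Lemma cl_indep I x : indep bs I ->
  (x \in cl bs I) = (x \in I) || ~~ indep bs (x |: I).
Proof.
move=> HI; rewrite clE (rank_indep HI).
case: (boolP (x \in I)) => xI /=; first by rewrite setU1_id // rank_indep // eqxx.
case: (boolP (indep bs (x |: I))) => Hx /=.
  by rewrite rank_indep // cardsU1 xI; apply/negP => /eqP; lia.
apply/eqP/anti_leq/andP; split; last by apply: rank_ge => //; apply: subsetUr.
apply: rank_le => B HB.
have: #|(x |: I) :&: B| < #|x |: I|.
  apply: proper_card; rewrite properE subsetIl /=; apply: contra Hx => H.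
  apply/indepP; exists B => //; apply: subset_trans H _; exact: subsetIr.
by rewrite cardsU1 xI.
Qed.

Lemma cl_sub I : indep bs I -> I \subset cl bs I.
Proof. by move=> HI; apply/subsetP => x xI; rewrite cl_indep // xI. Qed.

Lemma cl_mono I J : I \subset J -> indep bs J -> cl bs I \subset cl bs J.
Proof.
move=> sIJ HJ; have HI := indep_sub sIJ HJ.
apply/subsetP => x; rewrite !cl_indep //; case/orP => [xI|nd].
  by rewrite (subsetP sIJ x xI).
by apply/orP; right; apply: contra nd; apply: indep_sub; apply: setUS.
Qed.

Lemma ext_basis I B0 : indep bs I -> B0 \in bs ->
  exists2 B', B' \in bs & (I \subset B') && (B' \subset I :|: B0).
Proof.
move=> /indepP[B1 HB1 sIB1] HB0.
have: forall k B1, B1 \in bs -> I \subset B1 -> #|B1 :\: (I :|: B0)| <= k ->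
  exists2 B', B' \in bs & (I \subset B') && (B' \subset I :|: B0).
  elim=> [|k IH] B2 HB2 sIB2 Hk.
    exists B2 => //; rewrite sIB2 /=.
    by move: Hk; rewrite leqn0 cards_eq0 setD_eq0.
  case: (boolP (B2 \subset I :|: B0)) => sB2; first by exists B2 => //; apply/andP.
  case/subsetPn: sB2 => x xB2 xn.
  have xB0 : x \in B2 :\: B0.
    by rewrite inE xB2 andbT; apply: contra xn => H; rewrite inE H orbT.
  case: HM => _ /(_ B2 B0 HB2 HB0 x xB0) [y yB HB3].
  move: yB; rewrite inE => /andP[yB2 yB0].
  apply: (IH _ HB3).
    apply/subsetP => z zI; rewrite !inE (subsetP sIB2 z zI) andbT.
    apply/orP; right; apply/eqP => ezx; move: xn; rewrite inE -ezx zI //.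
  have: #|(y |: (B2 :\ x)) :\: (I :|: B0)| < #|B2 :\: (I :|: B0)|; last by lia.
  apply: proper_card; rewrite properE; apply/andP; split.
    apply/subsetP => z; rewrite !inE.
    case/andP => H1 /orP[/eqP Ezy|/andP[_ zB2]]; last by rewrite H1 zB2.
    by move: H1; rewrite Ezy yB0 orbT.
  apply/subsetPn; exists x; first by rewrite inE xn.
  rewrite !inE eqxx /= orbF.
  have -> : (x == y) = false by apply/eqP => Exy; move: yB2; rewrite -Exy xB2.
  by rewrite andbF.
by move/(_ _ B1 HB1 sIB1 (leqnn _)).
Qed.


Lemma aug I J : indep bs I -> indep bs J -> #|I| < #|J| ->
  exists2 x, x \in J :\: I & indep bs (x |: I).
Proof.
move=> HI /indepP[B2 HB2 sJB2] ltIJ.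
case: (ext_basis HI HB2) => B' HB' /andP[sIB' sB'].
case: (boolP [exists x in J :\: I, x \in B']).
  case/exists_inP => x xJI xB'; exists x => //.
  by apply/indepP; exists B' => //; rewrite subUset sub1set xB' sIB'.
move/exists_inPn => H.
have sub : B' \subset I :|: (B2 :\: J).
  apply/subsetP => z zB'; move: (subsetP sB' z zB'); rewrite !inE.
  case/orP => [->//|zB2]; rewrite zB2 andbT.
  case: (boolP (z \in I)) => //= zI; apply/negP => zJ.
  by move: (H z); rewrite inE zI zJ zB' => /(_ isT).
move: (subset_leq_card sub); rewrite (Hsz HB').
move: (leq_card_setU I (B2 :\: J)) => /leqifP; case: ifP => _ H1 H2.
  move: (cardsD B2 J); rewrite (setIidPr sJB2) (Hsz HB2) => H3.
  have := subset_leq_card sJB2; rewrite (Hsz HB2); lia.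
move: (cardsD B2 J); rewrite (setIidPr sJB2) (Hsz HB2) => H3.
have := subset_leq_card sJB2; rewrite (Hsz HB2); lia.
Qed.

Lemma rank_cl I : indep bs I -> rank bs (cl bs I) = #|I|.
Proof.
move=> HI; apply/anti_leq/andP; split; last exact: rank_ge (cl_sub HI) HI.
apply: rank_le => B HB; rewrite leqNgt; apply/negP => lt.
have HJ : indep bs (cl bs I :&: B) by apply: indep_sub (subsetIr _ _) (basis_indep HB).
case: (aug HI HJ lt) => x; rewrite in_setD in_setI => /andP[xI /andP[xcl _]] Hx.
by move: xcl; rewrite cl_indep // (negbTE xI) Hx.
Qed.

Lemma cl_flat I : indep bs I -> cl bs (cl bs I) = cl bs I.
Proof.
move=> HI; apply/setP => x; rewrite [x \in cl bs (cl bs I)]clE rank_cl //.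
case: (boolP (x \in cl bs I)) => Hx; first by rewrite setU1_id // rank_cl // eqxx.
move: (Hx); rewrite cl_indep // negb_or negbK => /andP[xI Hi].
apply/negbTE; apply/negP => /eqP E.
have := rank_ge (setUS [set x] (cl_sub HI)) Hi; rewrite E cardsU1 xI; lia.
Qed.

Lemma basis_ex : exists B, B \in bs.
Proof. by case: HM => /set0Pn[B HB] _; exists B. Qed.

Lemma rank_setT : rank bs setT = s.
Proof.
case: basis_ex => B0 HB0.
apply/anti_leq/andP; split.
  by apply: rank_le => B HB; rewrite setTI (Hsz HB).
by rewrite -(Hsz HB0); apply: rank_ge (subsetT _) (basis_indep HB0).
Qed.

Lemma cl_neqT I : indep bs I -> #|I| < s -> cl bs I != setT.
Proof.
move=> HI lt; apply/negP => /eqP E.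
by move: (rank_cl HI); rewrite E rank_setT => E'; move: lt; rewrite E' ltnn.
Qed.

Lemma circuit_dep C : circuit bs C -> ~~ indep bs C.
Proof. by case/andP. Qed.

Lemma circuit_proper C D : circuit bs C -> D \proper C -> indep bs D.
Proof. by case/andP => _ /forallP /(_ D) /implyP; apply. Qed.

Lemma circuit_ex X : ~~ indep bs X -> exists2 C, circuit bs C & C \subset X.
Proof.
have: forall k X, #|X| <= k -> ~~ indep bs X -> exists2 C, circuit bs C & C \subset X;
  last by move=> H; apply: (H _ _ (leqnn _)).
elim=> [|k IH] Y HY nY.
  move: HY; rewrite leqn0 cards_eq0 => /eqP E; move: nY; rewrite E.
  case: basis_ex => B0 HB0; by rewrite (indep_sub (sub0set B0) (basis_indep HB0)).
case: (boolP [forall D : {set T}, (D \proper Y) ==> indep bs D]) => H.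
  by exists Y => //; apply/andP.
case/forallPn: H => D; rewrite negb_imply => /andP[pD nD].
case: (IH D _ nD) => [|C HC sC]; first by have := proper_card pD; lia.
by exists C => //; apply: subset_trans sC (proper_sub pD).
Qed.

Lemma circuit_in I x : indep bs I -> ~~ indep bs (x |: I) ->
  exists2 C, circuit bs C & (C \subset x |: I) && (x \in C).
Proof.
move=> HI /circuit_ex[C HC sC]; exists C => //; rewrite sC /=.
apply/negP => xC; move: (circuit_dep HC); apply/negP/negPn.
apply: indep_sub HI; apply/subsetP => z zC; move: (subsetP sC z zC).
by case/setU1P => // E; move: xC; rewrite -E zC.
Qed.

Lemma fund_exch B x C b : B \in bs -> x \notin B -> circuit bs C ->
  C \subset x |: B -> b \in C -> b != x -> x |: (B :\ b) \in bs.
Proof.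
move=> HB xB HC sC bC bx.
have HI : indep bs (C :\ b) by apply: circuit_proper HC (properD1 bC).
case: (ext_basis HI HB) => B' HB' /andP[sIB' sB'].
have bB : b \in B by move: (subsetP sC b bC); case/setU1P => // E; move: bx; rewrite E eqxx.
have nbB' : b \notin B'.
  apply/negP => bB'; move: (circuit_dep HC); apply/negP/negPn.
  apply/indepP; exists B' => //; apply/subsetP => z zC.
  case: (eqVneq z b) => [->//|zb]; apply: (subsetP sIB'); by rewrite in_setD1 zb zC.
have xC : x \in C.
  apply/negP => xC; move: (circuit_dep HC); apply/negP/negPn.
  apply/indepP; exists B => //; apply/subsetP => z zC; move: (subsetP sC z zC).
  by case/setU1P => // E; move: xC; rewrite -E zC.
have sub : B' \subset x |: (B :\ b).
  apply/subsetP => z zB'.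
  have zb : z != b by apply/eqP => E; move: nbB'; rewrite -E zB'.
  move: (subsetP sB' z zB'); rewrite in_setU in_setD1 => /orP[/andP[_ zC]|zB].
    by move: (subsetP sC z zC); case/setU1P => [->|zB]; rewrite !inE ?eqxx // zb zB orbT.
  by rewrite !inE zb zB orbT.
have cE : #|B'| = #|x |: (B :\ b)|.
  rewrite (Hsz HB') cardsU1 !inE negb_and xB orbT /=.
  by move: (cardsD1 b B); rewrite bB (Hsz HB).
have E : B' = x |: (B :\ b) by apply/setP; apply/(subset_cardP cE).
by rewrite -E.
Qed.

Lemma fund_sub B x C C' : B \in bs -> x \notin B -> circuit bs C ->
  C \subset x |: B -> circuit bs C' -> C' \subset x |: B -> C \subset C'.
Proof.
move=> HB xB HC sC HC' sC'; apply/subsetP => z zC.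
case: (eqVneq z x) => [->|zx].
  apply/negP => xC'; move: (circuit_dep HC'); apply/negP/negPn.
  apply/indepP; exists B => //; apply/subsetP => w wC; move: (subsetP sC' w wC).
  by case/setU1P => // E; move: xC'; rewrite -E wC.
have HB2 := fund_exch HB xB HC sC zC zx.
apply/negP => zC'; move: (circuit_dep HC'); apply/negP/negPn.
apply/indepP; exists (x |: (B :\ z)) => //; apply/subsetP => w wC.
move: (subsetP sC' w wC); rewrite !inE; case/orP => [->//|wB].
by rewrite wB andbT orbC; apply/orP; left; apply/eqP => E; move: zC'; rewrite -E wC.
Qed.

Lemma dual_matroid : is_matroid (dual bs) /\
  forall B, B \in dual bs -> #|B| = #|T| - s.
Proof.
split; last first.
  by move=> B /imsetP[B0 HB0 ->]; rewrite cardsCs setCK (Hsz HB0).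
split.
  by case: basis_ex => B0 HB0; apply/set0Pn; exists (~: B0); apply: imset_f.
move=> B1' B2' /imsetP[B1 HB1 ->] /imsetP[B2 HB2 ->] x.
rewrite !inE negbK => /andP[xB2 xB1].
have nI : ~~ indep bs (x |: B1).
  apply/negP => /indep_card; rewrite cardsU1 xB1 (Hsz HB1); lia.
case: (circuit_in (basis_indep HB1) nI) => C HC /andP[sC xC].
have : ~~ (C \subset B2).
  by apply/negP => sCB2; move: (circuit_dep HC); rewrite (indep_sub sCB2 (basis_indep HB2)).
case/subsetPn => y yC yB2.
have yx : y != x by apply/eqP => E; move: yB2; rewrite E xB2.
have yB1 : y \in B1 by move: (subsetP sC y yC); case/setU1P => // E; move: yx; rewrite E eqxx.
have HB3 := fund_exch HB1 xB1 HC sC yC yx.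
exists y; first by rewrite !inE negbK yB1 yB2.
have -> : y |: (~: B1 :\ x) = ~: (x |: (B1 :\ y)).
  apply/setP => z; rewrite !inE.
  case: (eqVneq z y) => [->|zy] /=; first by rewrite (negbTE yx).
  case: (eqVneq z x) => [->|zx] /=; first by [].
  by [].
exact: imset_f.
Qed.

Lemma cl_fund B e P C : B \in bs -> P \subset B -> e \notin B -> e \in cl bs P ->
  circuit bs C -> C \subset e |: B -> C \subset e |: P.
Proof.
move=> HB sPB eB ecl HC sC.
have HP : indep bs P := indep_sub sPB (basis_indep HB).
move: ecl; rewrite cl_indep //.
have eP : e \notin P by apply: contra eB; apply: (subsetP sPB).
rewrite (negbTE eP) /= => nd.
case: (circuit_in HP nd) => C' HC' /andP[sC' _].
have sC'B : C' \subset e |: B by apply: subset_trans sC' (setUS _ sPB).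
exact: subset_trans (fund_sub HB eB HC sC HC' sC'B) sC'.
Qed.

End Gen.

Lemma cl_circuit (T : finType) (bs : {set {set T}}) (I C : {set T}) x :
  indep bs I -> circuit bs C -> C :\ x \subset I -> x \in cl bs I.
Proof.
move=> HI HC sC; rewrite cl_indep //; apply/orP; right.
apply: contra (circuit_dep HC) => Hi; apply: indep_sub Hi.
apply/subsetP => z zC; case: (eqVneq z x) => [->|zx]; first exact: setU11.
by apply: setU1r; apply: (subsetP sC); rewrite in_setD1 zx.
Qed.


Section SortEq.
Variables (T : eqType) (l1 l2 : rel T).
Hypothesis Hl : forall x y, x != y -> l1 x y = l2 x y.

Lemma merge_eq s1 s2 : uniq (s1 ++ s2) -> merge l1 s1 s2 = merge l2 s1 s2.
Proof.
elim: s1 s2 => [|x s1 IH1] s2 //=.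
elim: s2 => [|y s2 IH2] //= U.
have xy : x != y.
  by apply/eqP => E; move: U; rewrite E /= mem_cat ?inE eqxx ?orbT.
rewrite Hl //; case: (l2 x y).
  congr cons; apply: IH1; by move: U; rewrite /= => /andP[].
congr cons; apply: IH2; move: U => /=.
have S : subseq (s1 ++ s2) (s1 ++ y :: s2).
  by apply: cat_subseq; [exact: subseq_refl | exact: subseq_cons].
case/andP => H1 H2; rewrite (subseq_uniq S H2) andbT; apply: contra H1.
exact: (mem_subseq S).
Qed.

Lemma perm_push (l : rel T) s1 ss :
  perm_eq (flatten (merge_sort_push l s1 ss)) (s1 ++ flatten ss).
Proof.
elim: ss s1 => [|s2 ss IH] s1; first by rewrite /= perm_refl.
case: s2 => [|x s2]; first by rewrite /= perm_refl.
rewrite /=; apply: perm_trans (IH _) _.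
have Pm : perm_eq (merge l (x :: s2) s1) ((x :: s2) ++ s1) by apply/permPl; exact: perm_merge.
rewrite -(perm_cat2r (flatten ss)) in Pm; apply: perm_trans Pm _.
by rewrite -cat_cons catA perm_cat2r perm_catC.
Qed.

Lemma push_eq s1 ss : uniq (s1 ++ flatten ss) ->
  merge_sort_push l1 s1 ss = merge_sort_push l2 s1 ss.
Proof.
elim: ss s1 => [|s2 ss IH] s1 //.
case: s2 => [|x s2] //= U.
have P1 : perm_eq (s1 ++ x :: s2 ++ flatten ss) (((x :: s2) ++ s1) ++ flatten ss).
  by rewrite -cat_cons catA perm_cat2r perm_catC.
have U' : uniq (((x :: s2) ++ s1) ++ flatten ss) by rewrite -(perm_uniq P1).
have U1 : uniq ((x :: s2) ++ s1) by move: U'; rewrite cat_uniq => /andP[].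
rewrite merge_eq //; congr cons; apply: IH.
have Pm : perm_eq (merge l2 (x :: s2) s1) ((x :: s2) ++ s1) by apply/permPl; exact: perm_merge.
by rewrite -(perm_cat2r (flatten ss)) in Pm; rewrite (perm_uniq Pm).
Qed.

Lemma pop_eq s1 ss : uniq (s1 ++ flatten ss) ->
  merge_sort_pop l1 s1 ss = merge_sort_pop l2 s1 ss.
Proof.
elim: ss s1 => [|s2 ss IH] s1 //= U.
have P1 : perm_eq (s1 ++ s2 ++ flatten ss) ((s2 ++ s1) ++ flatten ss).
  by rewrite catA perm_cat2r perm_catC.
have U' : uniq ((s2 ++ s1) ++ flatten ss) by rewrite -(perm_uniq P1).
have U1 : uniq (s2 ++ s1) by move: U'; rewrite cat_uniq => /andP[].
rewrite merge_eq //; apply: IH.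
have Pm : perm_eq (merge l2 s2 s1) (s2 ++ s1) by apply/permPl; exact: perm_merge.
by rewrite -(perm_cat2r (flatten ss)) in Pm; rewrite (perm_uniq Pm).
Qed.

Lemma rec1_eq ss s : uniq (s ++ flatten ss) ->
  sort_rec1 l1 ss s = sort_rec1 l2 ss s.
Proof.
elim: s ss => [|x s IH] ss U /=; first exact: pop_eq.
have Ux : uniq ([:: x] ++ flatten ss).
  move: U => /= /andP[xn U2]; apply/andP; split.
    by apply: contra xn; rewrite mem_cat orbC => ->.
  by move: U2; rewrite cat_uniq => /and3P[].
rewrite push_eq //; apply: IH.
have P1 := perm_push l2 [:: x] ss.
have P2 : perm_eq (s ++ flatten (merge_sort_push l2 [:: x] ss)) (x :: s ++ flatten ss).
  apply: perm_trans (_ : perm_eq _ (s ++ x :: flatten ss)) _; first by rewrite perm_cat2l.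
  by rewrite perm_sym -cat1s perm_catCA.
by rewrite (perm_uniq P2).
Qed.

Lemma sort_eq s : uniq s -> sort l1 s = sort l2 s.
Proof. by move=> U; rewrite !sortE; apply: rec1_eq; rewrite cats0. Qed.

End SortEq.

Lemma path_strict (T : eqType) (l1 l2 : rel T) x s :
  (forall x y, x != y -> l1 x y = l2 x y) -> uniq (x :: s) -> path l2 x s -> path l1 x s.
Proof.
move=> Hl; elim: s x => [|y s IH] x //= /andP[xn U] /andP[lxy P].
have xy : x != y by apply: contra xn => /eqP->; rewrite inE eqxx.
rewrite Hl // lxy /=; apply: IH => //.
Qed.

Lemma sorted_strict (T : eqType) (l1 l2 : rel T) s :
  (forall x y, x != y -> l1 x y = l2 x y) -> total l2 -> uniq s -> sorted l1 (sort l1 s).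
Proof.
move=> Hl tot U; rewrite (sort_eq Hl U).
have := sort_sorted tot s; have := U; rewrite -(sort_uniq l2).
case: (sort l2 s) => //= x t; exact: path_strict.
Qed.

Section SeqH.
Variables (T : eqType) (x0 : T).
Lemma mytake_nth s t x : x \in take t s -> exists i, [/\ i < t, i < size s & nth x0 s i = x].
Proof.
case/(nthP x0) => i Hi <-; move: Hi; rewrite size_take_min leq_min => /andP[it isz].
by exists i; rewrite nth_take.
Qed.
Lemma mydrop_nth s t x : x \in drop t s -> exists i, [/\ t <= i, i < size s & nth x0 s i = x].
Proof.
case/(nthP x0) => i Hi <-; move: Hi; rewrite size_drop => Hi.
by exists (t + i); rewrite nth_drop; split => //; lia.
Qed.
Lemma nth_in_take s t i : i < t -> i < size s -> nth x0 s i \in take t s.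
Proof. by move=> it isz; rewrite -(nth_take x0 it); apply: mem_nth; rewrite size_take_min leq_min it. Qed.
Lemma nth_in_drop s t i : t <= i -> i < size s -> nth x0 s i \in drop t s.
Proof.
move=> ti isz; rewrite -(subnKC ti) -nth_drop; apply: mem_nth.
by rewrite size_drop; lia.
Qed.
End SeqH.

Lemma set_min n (X : {set 'I_n.+1}) : X != set0 ->
  exists2 m, m \in X & forall z, z \in X -> m <= z.
Proof.
case/set0Pn => x xX.
case: (@arg_minnP _ x (fun i => i \in X) (fun i => nat_of_ord i) xX) => m H1 H2.
by exists m.
Qed.

Section Main.
Variables (n r k : nat) (bases : {set {set 'I_n.+1}}).
Hypothesis HM : is_matroid bases.
Hypothesis Hloop : loopless bases.
Hypothesis Hcoloop : coloopless bases.
Hypothesis Hrank : forall B, B \in bases -> #|B| = r.+1.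
Variable B : {set 'I_n.+1}.
Hypothesis HB : nbc bases B.
Hypothesis HIA : #|IA bases B| = k.+1.

Local Notation E := 'I_n.+1.
Local Notation db := (dual bases).
Local Notation A := (B :\: IA bases B).
Local Notation D := (coB_nomin B).
Implicit Types (P Q X C : {set E}).

Lemma HBb : B \in bases. Proof. by case/andP: HB. Qed.
Lemma HEA : EA bases B = set0. Proof. by case/andP: HB => _ /eqP. Qed.
Lemma HMd : is_matroid db. Proof. exact: (dual_matroid HM Hrank).1. Qed.
Lemma Hszd X : X \in db -> #|X| = n.+1 - r.+1.
Proof. by move=> HX; rewrite ((dual_matroid HM Hrank).2 X HX) card_ord. Qed.
Lemma HBd : ~: B \in db. Proof. exact: imset_f HBb. Qed.

Lemma EA_wit e : e \notin B -> exists2 C, circuit bases C &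
  [/\ C \subset e |: B, e \in C & exists2 y, y \in C & y < e].
Proof.
move=> eB; have : e \notin EA bases B by rewrite HEA inE.
rewrite /EA inE inE eB /= => /forallPn [C]; rewrite negb_imply.
case/andP => /andP[/andP[HC sC] eC] /forall_inPn [y yC].
rewrite -ltnNge => lt; exists C => //; split => //; last by exists y.
by rewrite setUC.
Qed.

Lemma IA_wit e : e \in A -> e \in B /\ exists2 C, circuit db C &
  [/\ C \subset e |: ~: B, e \in C & exists2 y, y \in C & y < e].
Proof.
rewrite in_setD => /andP[nIA eB]; split => //.
move: nIA; rewrite /IA inE eB /= => /forallPn [C]; rewrite negb_imply.
case/andP => /andP[/andP[HC sC] eC] /forall_inPn [y yC].
rewrite -ltnNge => lt; exists C => //; split => //; last by exists y.
by rewrite setUC.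
Qed.

Lemma IA_all x : x \in IA bases B -> x \in B /\
  forall C, circuit db C -> C \subset x |: ~: B -> x \in C -> forall z, z \in C -> x <= z.
Proof.
rewrite /IA inE => /andP[xB /forallP H]; split => // C HC sC xC z zC.
move: (H C); rewrite /cocircuit HC setUC sC xC /= => /forall_inP; exact.
Qed.

Lemma IA_sub : IA bases B \subset B.
Proof. by apply/subsetP => x /IA_all[]. Qed.

Lemma K1 (e : E) P : P \subset B -> (forall x, x \in P -> e < x) -> e \notin cl bases P.
Proof.
move=> sPB H.
have HP : indep bases P := indep_sub sPB (basis_indep HBb).
case: (boolP (e \in B)) => eB.
  rewrite cl_indep // negb_or negbK.
  have -> : e \notin P by apply/negP => /H; rewrite ltnn.
  by apply/indepP; exists B; [exact: HBb | rewrite subUset sub1set eB sPB].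
apply/negP => ecl.
case: (EA_wit eB) => C HC [sC eC [y yC ylt]].
have := subsetP (cl_fund HM Hrank HBb sPB eB ecl HC sC) y yC.
case/setU1P => [Ey|yP]; first by move: ylt; rewrite Ey ltnn.
by have := ltn_trans ylt (H y yP); rewrite ltnn.
Qed.

Lemma K2 (e : E) Q : (e \in A) || (e \notin B) -> Q \subset ~: B ->
  (forall x, x \in Q -> e < x) -> e \notin clp bases Q.
Proof.
move=> He sQ H; rewrite /clp.
have HQ : indep db Q := indep_sub sQ (basis_indep HBd).
case: (boolP (e \in B)) => eB; last first.
  rewrite cl_indep // negb_or negbK.
  have -> : e \notin Q by apply/negP => /H; rewrite ltnn.
  by apply/indepP; exists (~: B); [exact: HBd | rewrite subUset sub1set inE eB sQ].
have eA : e \in A by move: He; rewrite eB orbF.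
apply/negP => ecl.
have eB' : e \notin ~: B by rewrite inE negbK.
case: (IA_wit eA) => _ [C HC [sC eC [y yC ylt]]].
have := subsetP (cl_fund HMd Hszd HBd sQ eB' ecl HC sC) y yC.
case/setU1P => [Ey|yP]; first by move: ylt; rewrite Ey ltnn.
by have := ltn_trans ylt (H y yP); rewrite ltnn.
Qed.

Lemma K4 x : x \in IA bases B -> exists2 C, circuit db C &
  [/\ C \subset x |: ~: B, x \in C, C :\ x != set0 & forall z, z \in C -> x <= z].
Proof.
move=> xIA; case: (IA_all xIA) => xB Hall.
have nd : ~~ indep db (x |: ~: B).
  apply/negP => /(indep_card Hszd); rewrite cardsU1 inE xB /= (Hszd HBd); lia.
case: (circuit_in HMd (basis_indep HBd) nd) => C HC /andP[sC xC].
exists C => //; split => //; last exact: Hall.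
apply/negP => /eqP C0; move: (circuit_dep HC); apply/negP/negPn.
case: (Hcoloop x) => B' HB' xB'.
apply/indepP; exists (~: B'); first exact: imset_f.
apply/subsetP => z zC; case: (eqVneq z x) => [->|zx]; first by rewrite inE.
have zCx : z \in C :\ x by rewrite in_setD1 zx zC.
by rewrite C0 inE in zCx.
Qed.

Lemma D_sub : D \subset ~: B.
Proof. by apply/subsetP => x; rewrite inE => /andP[]. Qed.

Lemma part2 (e : E) : e \in A :|: D ->
  is_max (~: (cl bases (gt_part A e) :|: clp bases (gt_part (~: B) e))) e.
Proof.
move=> eAD; split.
  rewrite inE in_setU negb_or; apply/andP; split.
    apply: K1; first by apply/subsetP => x; rewrite inE in_setD => /andP[/andP[]].
    by move=> x; rewrite inE => /andP[].
  apply: K2; last by move=> x; rewrite inE => /andP[].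
    move: eAD; rewrite in_setU => /orP[->//|eD]; apply/orP; right.
    by move: (subsetP D_sub e eD); rewrite inE.
  by apply/subsetP => x; rewrite inE => /andP[].
move=> y; rewrite inE in_setU negb_or => /andP[n1 n2].
rewrite leqNgt; apply/negP => lt.
have HQ : indep db (gt_part (~: B) e).
  apply: indep_sub (basis_indep HBd); by apply/subsetP => x; rewrite inE => /andP[].
case: (boolP (y \in B)) => yB.
  case: (boolP (y \in IA bases B)) => yIA.
    case: (K4 yIA) => C HC [sC yC _ Hge].
    move: n2; rewrite /clp (cl_circuit (x := y) HQ HC) //.
    apply/subsetP => z; rewrite in_setD1 => /andP[zy zC]; rewrite inE.
    move: (subsetP sC z zC); case/setU1P => [Ez|->]; first by move: zy; rewrite Ez eqxx.
    exact: leq_trans lt (Hge z zC).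
  move: n1; rewrite (subsetP (cl_sub _)) //.
    by apply: indep_sub (basis_indep HBb); apply/subsetP => x; rewrite inE in_setD => /andP[/andP[]].
  by rewrite inE in_setD yIA yB lt.
move: n2; rewrite /clp (subsetP (cl_sub HQ)) //.
by rewrite inE inE yB lt.
Qed.

Lemma card_A : #|A| = r - k.
Proof. by rewrite cardsD (setIidPr IA_sub) (Hrank HBb) HIA subSS. Qed.

Lemma k_le_r : k <= r.
Proof. by have := subset_leq_card IA_sub; rewrite HIA (Hrank HBb). Qed.

Lemma r_lt_n : r < n.
Proof.
case: (Hcoloop ord0) => B' HB' nB'.
have : #|B'| < #|[set: E]|.
  apply: proper_card; rewrite properT; apply/negP => /eqP E'; by move: nB'; rewrite E' inE.
by rewrite cardsT card_ord (Hrank HB').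
Qed.

Lemma ord_ltn (a b : E) : a <= b -> a != b -> a < b.
Proof. by move=> le ne; rewrite ltn_neqAle le andbT; exact: ne. Qed.

Lemma D_char : exists2 m0 : E, m0 \in ~: B & [/\ forall y, y \in ~: B -> m0 <= y,
  D = ~: B :\ m0 & forall e, e \in A :|: D -> m0 < e].
Proof.
have : ~: B != set0 by rewrite -card_gt0 (Hszd HBd); have := r_lt_n; lia.
case/set_min => m0 m0B Hmin.
have DE : D = ~: B :\ m0.
  apply/setP => x; rewrite /coB_nomin !inE.
  case: (boolP (x \in B)) => xB /=; first by rewrite andbF.
  rewrite andbT; apply/idP/idP.
    case/exists_inP => y yB lt; apply/eqP => Ex; have := Hmin y yB; rewrite -Ex; lia.
  move=> xm0; apply/exists_inP; exists m0 => //; apply: ord_ltn; last by rewrite eq_sym.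
  by apply: Hmin; rewrite inE.
exists m0 => //; split => // e; rewrite in_setU => /orP[eA|].
  case: (IA_wit eA) => _ [C HC [sC eC [y yC ylt]]].
  have yB : y \in ~: B.
    move: (subsetP sC y yC); case/setU1P => // Ey; by move: ylt; rewrite Ey ltnn.
  exact: leq_ltn_trans (Hmin y yB) ylt.
rewrite DE in_setD1 => /andP[em0 eB]; apply: ord_ltn; first exact: Hmin.
by rewrite eq_sym.
Qed.

Lemma card_D : #|D| = n.+1 - r.+1 - 1.
Proof.
case: D_char => m0 m0B [_ DE _]; rewrite DE -(Hszd HBd).
by rewrite (cardsD1 m0 (~: B)) m0B add1n subn1.
Qed.

Local Notation sA := (sort (fun x y : E => y < x) (enum A)).
Local Notation sD := (sort (fun x y : E => x < y) (enum D)).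
Local Notation sq := (nbc_seq bases B).

Lemma sqE : sq = sA ++ sD. Proof. by []. Qed.
Lemma size_sA : size sA = #|A|. Proof. by rewrite size_sort cardE. Qed.
Lemma size_sD : size sD = #|D|. Proof. by rewrite size_sort cardE. Qed.
Lemma mem_sA x : (x \in sA) = (x \in A). Proof. by rewrite mem_sort mem_enum. Qed.
Lemma mem_sD x : (x \in sD) = (x \in D). Proof. by rewrite mem_sort mem_enum. Qed.

Lemma uniq_sq : uniq sq.
Proof.
rewrite sqE cat_uniq !sort_uniq !enum_uniq /= andbT.
apply/hasPn => x; rewrite mem_sD => xD; rewrite mem_sA in_setD negb_and; apply/orP; right.
by move: (subsetP D_sub x xD); rewrite inE.
Qed.

Lemma size_sq : size sq = n - k - 1.
Proof.
rewrite sqE size_cat size_sA size_sD card_A card_D.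
have := r_lt_n; have := k_le_r; lia.
Qed.

Lemma size_sqE : size sq = #|A| + size sD.
Proof. by rewrite sqE size_cat size_sA. Qed.

Lemma sA_sorted : sorted (fun x y : E => y < x) sA.
Proof.
apply: (sorted_strict (l2 := fun x y : E => y <= x)); last exact: enum_uniq.
  move=> x y xy /=; have xy' : nat_of_ord x != nat_of_ord y := xy.
  by rewrite ltn_neqAle eq_sym xy'.
by move=> x y; exact: leq_total.
Qed.

Lemma sD_sorted : sorted (fun x y : E => x < y) sD.
Proof.
apply: (sorted_strict (l2 := fun x y : E => x <= y)); last exact: enum_uniq.
  move=> x y xy /=; have xy' : nat_of_ord x != nat_of_ord y := xy.
  by rewrite ltn_neqAle xy'.
by move=> x y; exact: leq_total.
Qed.

Lemma nth_A i : i < #|A| -> nth ord0 sq i = nth ord0 sA i.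
Proof. by move=> hi; rewrite sqE nth_cat size_sA hi. Qed.

Lemma nth_A_mem i : i < #|A| -> nth ord0 sq i \in A.
Proof. by move=> hi; rewrite nth_A // -mem_sA mem_nth // size_sA. Qed.

Lemma nth_D i : #|A| <= i -> nth ord0 sq i = nth ord0 sD (i - #|A|).
Proof. by move=> hi; rewrite sqE nth_cat size_sA ltnNge hi. Qed.

Lemma nth_D_mem i : #|A| <= i -> i < size sq -> nth ord0 sq i \in D.
Proof.
move=> hi him; rewrite nth_D // -mem_sD mem_nth //.
move: him; rewrite size_sqE; move: (size _) => z; lia.
Qed.

Lemma ltA i j : i < j -> j < #|A| -> nth ord0 sq j < nth ord0 sq i.
Proof.
move=> ij hj; rewrite !nth_A //; last by lia.
have trA : transitive (fun x y : E => y < x) by move=> a b c /= h1 h2; exact: ltn_trans h2 h1.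
apply: (sorted_ltn_nth trA ord0 sA_sorted) => //; rewrite inE size_sA //; lia.
Qed.

Lemma ltD i j : #|A| <= i -> i < j -> j < size sq -> nth ord0 sq i < nth ord0 sq j.
Proof.
move=> hi ij jm; rewrite !nth_D //; last by lia.
have trD : transitive (fun x y : E => x < y) by move=> a b c /= h1 h2; exact: ltn_trans h1 h2.
move: jm; rewrite size_sqE => jm.
apply: (sorted_ltn_nth trD ord0 sD_sorted); rewrite ?inE; lia.
Qed.

Lemma idx_A x : x \in A -> exists2 j, j < #|A| & nth ord0 sq j = x.
Proof.
move=> xA; have xs : x \in sA by rewrite mem_sA.
have hi : index x sA < #|A| by rewrite -size_sA index_mem.
by exists (index x sA) => //; rewrite nth_A // nth_index.
Qed.

Lemma idx_D x : x \in D -> exists j, [/\ #|A| <= j, j < size sq & nth ord0 sq j = x].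
Proof.
move=> xD; have xs : x \in sD by rewrite mem_sD.
have hi : index x sD < size sD by rewrite index_mem.
exists (#|A| + index x sD); split; first exact: leq_addr.
  by rewrite size_sqE ltn_add2l.
by rewrite nth_D ?leq_addr // addKn nth_index.
Qed.

Local Notation PF j := [set x in take j.+1 sq].
Local Notation QG j := [set x in drop j sq].

Lemma PF_sub j : j < #|A| -> PF j \subset A.
Proof.
move=> hj; apply/subsetP => x; rewrite inE => /(mytake_nth ord0) [i [ij isz Ex]]; rewrite -Ex.
apply: nth_A_mem; lia.
Qed.

Lemma PF_gt j x : j < #|A| -> x \in PF j -> nth ord0 sq j <= x.
Proof.
move=> hj; rewrite inE => /(mytake_nth ord0) [i [ij isz Ex]]; rewrite -Ex.
case: (ltngtP i j) => [lt|gt|->//]; first by apply: ltnW; apply: ltA.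
by lia.
Qed.

Lemma PF_mem j : j < size sq -> nth ord0 sq j \in PF j.
Proof. by move=> jm; rewrite inE; apply: nth_in_take. Qed.

Lemma PF_card j : j < size sq -> #|PF j| = j.+1.
Proof.
move=> jm; rewrite cardsE; move/card_uniqP: (take_uniq j.+1 uniq_sq) => ->.
by rewrite size_takel.
Qed.

Lemma PF_mono i j : i <= j -> PF i \subset PF j.
Proof.
move=> ij; apply/subsetP => x; rewrite !inE => H.
by rewrite -(take_takel sq (_ : i.+1 <= j.+1)) in H; [exact: mem_take H | ].
Qed.

Lemma QG_sub j : #|A| <= j -> QG j \subset D.
Proof.
move=> hj; apply/subsetP => x; rewrite inE => /(mydrop_nth ord0) [i [ij isz Ex]]; rewrite -Ex.
apply: nth_D_mem => //; lia.
Qed.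

Lemma QG_gt j x : #|A| <= j -> x \in QG j -> nth ord0 sq j <= x.
Proof.
move=> hj; rewrite inE => /(mydrop_nth ord0) [i [ij isz Ex]]; rewrite -Ex.
case: (ltngtP j i) => [lt|gt|->//]; first by apply: ltnW; apply: ltD.
by lia.
Qed.

Lemma QG_mem j : j < size sq -> nth ord0 sq j \in QG j.
Proof. by move=> jm; rewrite inE; apply: nth_in_drop. Qed.

Lemma QG_card j : #|QG j| = size sq - j.
Proof.
rewrite cardsE; move/card_uniqP: (drop_uniq j uniq_sq) => ->.
by rewrite size_drop.
Qed.

Lemma QG_mono i j : i <= j -> QG j \subset QG i.
Proof.
move=> ij; apply/subsetP => x; rewrite !inE => H.
by rewrite -(subnK ij) -drop_drop in H; exact: mem_drop H.
Qed.

Lemma QG_all j x : #|A| <= j -> j < size sq -> x \in D -> nth ord0 sq j <= x -> x \in QG j.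
Proof.
move=> hj jm xD le; case: (idx_D xD) => j' [hj' j'm Ej'].
rewrite inE; case: (leqP j j') => jj'; first by rewrite -Ej'; apply: nth_in_drop.
by have := ltD hj' jj' jm; rewrite Ej'; lia.
Qed.

Local Notation F := (nbc_F bases B).
Local Notation G := (nbc_G bases B).

Lemma FE j : F j = if j < #|A| then cl bases (PF j) else setT. Proof. by []. Qed.
Lemma GE j : G j = if j < #|A| then setT else cl db (QG j). Proof. by []. Qed.

Lemma A_le_sq : #|A| <= size sq. Proof. by rewrite size_sqE leq_addr. Qed.

Lemma indep_PF j : j < #|A| -> indep bases (PF j).
Proof.
move=> hj; apply: indep_sub (basis_indep HBb).
exact: subset_trans (PF_sub hj) (subsetDl _ _).
Qed.

Lemma indep_QG j : #|A| <= j -> indep db (QG j).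
Proof. by move=> hj; apply: indep_sub (basis_indep HBd); exact: subset_trans (QG_sub hj) D_sub. Qed.

Lemma monoFG i j : i <= j -> F i \subset F j /\ G j \subset G i.
Proof.
move=> ij; rewrite !FE !GE; case: (ltnP j #|A|) => hj.
  have hi : i < #|A| by lia.
  rewrite hi; split; [exact: cl_mono (PF_mono ij) (indep_PF hj) | exact: subxx].
case: (ltnP i #|A|) => hi; split; try exact: subsetT.
exact: cl_mono (QG_mono ij) (indep_QG hi).
Qed.

Lemma neq_pair i j : i < j -> j < size sq -> (F i, G i) <> (F j, G j).
Proof.
move=> ij jm [EF EG]; move: EF EG; rewrite !FE !GE.
case: (ltnP j #|A|) => hj.
  have hi : i < #|A| by lia.
  rewrite hi => EF _.
  have := rank_cl HM Hrank (indep_PF hi); rewrite EF (rank_cl HM Hrank (indep_PF hj)) !PF_card; [lia | have := A_le_sq; lia | have := A_le_sq; lia].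
case: (ltnP i #|A|) => hi.
  move=> EF _; have Hc : #|PF i| < r.+1.
    rewrite PF_card; last by have := A_le_sq; lia.
    by move: hi; rewrite card_A; lia.
  by move: (cl_neqT HM Hrank (indep_PF hi) Hc); rewrite EF eqxx.
move=> _ EG; have := rank_cl HMd Hszd (indep_QG hi); rewrite EG (rank_cl HMd Hszd (indep_QG (leq_trans hi (ltnW ij)))) !QG_card.
lia.
Qed.

Lemma biflat_j j : j < size sq -> biflat bases (F j) (G j).
Proof.
move=> jm; rewrite FE GE; case: (ltnP j #|A|) => hj.
  split.
  - by rewrite /flat (cl_flat HM Hrank (indep_PF hj)) eqxx.
  - by rewrite /flat cl_setT.
  - apply/andP; split; apply/set0Pn; last by exists ord0; rewrite inE.
    exists (nth ord0 sq j); exact: subsetP (cl_sub (indep_PF hj)) _ (PF_mem jm).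
  - rewrite eqxx andbT; apply: (cl_neqT HM Hrank (indep_PF hj)).
    by rewrite PF_card //; move: hj; rewrite card_A; lia.
  - exact: setUT.
split.
- by rewrite /flat cl_setT.
- by rewrite /flat (cl_flat HMd Hszd (indep_QG hj)) eqxx.
- apply/andP; split; apply/set0Pn; first by exists ord0; rewrite inE.
  exists (nth ord0 sq j); exact: subsetP (cl_sub (indep_QG hj)) _ (QG_mem jm).
- rewrite eqxx /=; apply: (cl_neqT HMd Hszd (indep_QG hj)).
  have H1 := subset_leq_card (QG_sub hj); have H2 := r_lt_n; rewrite card_D in H1.
  by move: H1; move: (#|QG j|) => c H1; lia.
- exact: setTU.
Qed.

Lemma memFG i : i < size sq -> nth ord0 sq i \in F i :&: G i.
Proof.
move=> im; rewrite FE GE; case: (ltnP i #|A|) => hi; rewrite in_setI in_setT ?andbT /=.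
  exact: subsetP (cl_sub (indep_PF hi)) _ (PF_mem im).
exact: subsetP (cl_sub (indep_QG hi)) _ (QG_mem im).
Qed.

Lemma coverFG : \bigcup_(j < size sq) (F j :&: G j) != setT.
Proof.
case: D_char => m0 m0B [Hmin DE Hgt].
apply/negP => /eqP H; have : m0 \in [set: E] by rewrite inE.
rewrite -H => /bigcupP [j _]; rewrite FE GE.
have m0nB : m0 \notin B by move: m0B; rewrite inE.
case: (ltnP j #|A|) => hj; rewrite inE => /andP[H1 H2].
  have sPB : PF j \subset B := subset_trans (PF_sub hj) (subsetDl _ _).
  case: (EA_wit m0nB) => C HC [sC m0C [y yC ylt]].
  have := subsetP (cl_fund HM Hrank HBb sPB m0nB H1 HC sC) y yC.
  case/setU1P => [Ey|yP]; first by move: ylt; rewrite Ey ltnn.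
  have := subsetP (PF_sub hj) y yP; rewrite in_setD => /andP[/negP nIA yB].
  apply: nIA; rewrite /IA inE yB /=; apply/forallP => C2; apply/implyP.
  case/andP => /andP[_ sC2] yC2; apply/forall_inP => z zC2.
  move: (subsetP sC2 z zC2); rewrite in_setU => /orP[zB|]; last by rewrite inE => /eqP->.
  exact: ltnW (leq_trans ylt (Hmin z zB)).
move: H2; rewrite (cl_indep _ (indep_QG hj)); apply/negP; rewrite negb_or negbK; apply/andP; split.
  by apply/negP => /(subsetP (QG_sub hj)); rewrite DE !inE eqxx.
apply: indep_sub (basis_indep HBd).
rewrite subUset sub1set m0B /=; exact: subset_trans (QG_sub hj) D_sub.
Qed.

Lemma maxFG i : i < size sq ->
  is_max (~: \bigcup_(j < size sq | nth ord0 sq i < nth ord0 sq j) (F j :&: G j)) (nth ord0 sq i).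
Proof.
move=> im; set ei := nth ord0 sq i.
case: D_char => m0 m0B [Hmin DE Hgt].
have Hei : ei \in A :|: D.
  rewrite in_setU; case: (ltnP i #|A|) => hi; first by rewrite nth_A_mem.
  by rewrite nth_D_mem ?orbT.
have HeiAB : (ei \in A) || (ei \notin B).
  move: Hei; rewrite in_setU => /orP[->//|eD]; apply/orP; right.
  by move: (subsetP D_sub ei eD); rewrite inE.
have m0ei := Hgt ei Hei.
split.
  rewrite inE; apply/negP => /bigcupP [j Hj]; rewrite FE GE.
  case: (ltnP j #|A|) => hj; rewrite inE => /andP[H1 H2].
    move: H1; apply/negP; apply: K1; first exact: subset_trans (PF_sub hj) (subsetDl _ _).
    by move=> x /(PF_gt hj) le; exact: leq_trans Hj le.
  move: H2; apply/negP; apply: K2 => //; first exact: subset_trans (QG_sub hj) D_sub.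
  by move=> x /(QG_gt hj) le; exact: leq_trans Hj le.
move=> y; rewrite inE => ny; rewrite leqNgt; apply/negP => lt; move: ny; apply/negP; rewrite negbK.
have inU : forall j, j < size sq -> ei < nth ord0 sq j -> y \in F j :&: G j ->
    y \in \bigcup_(j < size sq | ei < nth ord0 sq j) (F j :&: G j).
  by move=> j jm H1 H2; apply/bigcupP; exists (Ordinal jm).
have yD : y \notin B -> y \in D.
  move=> yB; rewrite DE !inE yB andbT; apply/eqP => Ey; move: lt; rewrite Ey => lt'.
  by have := ltn_trans lt' m0ei; rewrite ltnn.
case: (boolP (y \in B)) => yB; last first.
  case: (idx_D (yD yB)) => j [hj jm Ej].
  by apply: (inU j jm); [rewrite Ej | rewrite -Ej; apply: memFG].
case: (boolP (y \in IA bases B)) => yIA; last first.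
  have yA : y \in A by rewrite in_setD yIA yB.
  case: (idx_A yA) => j hj Ej.
  have jm : j < size sq by exact: leq_trans hj A_le_sq.
  by apply: (inU j jm); [rewrite Ej | rewrite -Ej; apply: memFG].
case: (K4 yIA) => C HC [sC yC Cne Hge].
case: (set_min Cne) => d0 d0C Hd0.
have d0nB : d0 \in ~: B.
  move: d0C; rewrite in_setD1 => /andP[dy dC]; move: (subsetP sC d0 dC).
  by case/setU1P => // Ed; move: dy; rewrite Ed eqxx.
have yd0 : y <= d0 by apply: Hge; move: d0C; rewrite in_setD1 => /andP[].
have d0D : d0 \in D.
  rewrite DE !inE; move: d0nB; rewrite inE => ->; rewrite andbT.
  apply/eqP => Ed; move: yd0; rewrite Ed => yd0.
  by have := leq_trans (ltn_trans m0ei lt) yd0; rewrite ltnn.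
case: (idx_D d0D) => j [hj jm Ej].
apply: (inU j jm); first by rewrite Ej; exact: leq_trans lt yd0.
rewrite FE GE ltnNge hj /= inE inE /=.
apply: (cl_circuit (indep_QG hj) HC); apply/subsetP => z zC'.
have zB : z \in ~: B.
  move: zC'; rewrite in_setD1 => /andP[zy zC]; move: (subsetP sC z zC).
  by case/setU1P => // Ez; move: zy; rewrite Ez eqxx.
have dz : d0 <= z by apply: Hd0.
apply: QG_all => //; last by rewrite Ej.
rewrite DE !inE; move: zB; rewrite inE => ->; rewrite andbT; apply/eqP => Ez; move: dz; rewrite Ez => dz.
by have := leq_trans (leq_trans (ltn_trans m0ei lt) yd0) dz; rewrite ltnn.
Qed.

Lemma inT_main : in_T bases (n - k - 1) (nbc_F bases B) (nbc_G bases B) (nbc_e bases B).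
Proof.
rewrite -size_sq; split.
- split.
  + by move=> j jm; apply: biflat_j.
  + move=> i j im jm; rewrite /compatible; case: (leqP i j) => ij.
      by case: (monoFG ij) => -> ->.
    by case: (monoFG (ltnW ij)) => -> ->; rewrite orbT.
  + move=> i j im jm Eij; case: (ltngtP i j) => // ij.
      by case: (neq_pair ij jm).
    by case: (neq_pair ij im).
  + exact: coverFG.
- by move=> i j /andP[ij jm]; apply: monoFG.
- move=> i j im jm /eqP; rewrite /nbc_e nth_uniq ?uniq_sq //; exact/eqP.
- by move=> i im; apply: memFG.
- by move=> i im; apply: maxFG.
Qed.

End Main.

Theorem mainTheorem8 (n r k : nat) (bases : {set {set 'I_n.+1}})
  (HM : is_matroid bases) (Hloop : loopless bases) (Hcoloop : coloopless bases)
  (Hrank : forall B, B \in bases -> #|B| = r.+1)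
  (B : {set 'I_n.+1}) (HB : nbc bases B) (HIA : #|IA bases B| = k.+1) :
  in_T bases (n - k - 1) (nbc_F bases B) (nbc_G bases B) (nbc_e bases B)
  /\
  (forall e : 'I_n.+1, e \in (B :\: IA bases B) :|: coB_nomin B ->
     is_max (~: (cl bases (gt_part (B :\: IA bases B) e)
                 :|: clp bases (gt_part (~: B) e))) e).
Proof.
split; first by apply: inT_main; eassumption.
by move=> e He; apply: part2; eassumption.
Qed.
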